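(* Let $T>0$, $M>0$ and $\varepsilon\in(\varepsilon_j)_{j\in\mathbb N}$ be such that $\|u_{0\varepsilon}-\varepsilon\|_{\Phi,\infty}<\infty$. Then any solution $u_\varepsilon$ of the regularized problem which satisfies $\int_\Omega|\nabla u_\varepsilon(t)|^2\le M$ for all $t\in[0,T]$ fulfils $$\|u_\varepsilon(t)-\varepsilon\|_{\Phi,\infty}\le\max\{M,\|u_{0\varepsilon}-\varepsilon\|_{\Phi,\infty}\}\quad\text{for } t\in[0,T].$$
   Context: $\Omega\subset\mathbb{R}^N$ is a bounded smooth domain; $\Phi$ solves $-\Delta\Phi=1$ in $\Omega$, $\Phi=0$ on $\partial\Omega$, and $\|v\|_{\Phi,\infty}:=\operatorname{ess\,sup}_\Omega|v/\Phi|$. $(\varepsilon_j)\subset(0,1)$ decreases to $0$; $\rho_\varepsilon(z):=\min\{z,1/\varepsilon\}$; $(u_{0\varepsilon})_{\varepsilon\in(\varepsilon_j)}\subset C^3(\bar\Omega)$ with $u_{0\varepsilon}\ge\varepsilon$ in $\Omega$, $u_{0\varepsilon}=\varepsilon$ and $\Delta u_{0\varepsilon}=-\int_\Omega|\nabla u_{0\varepsilon}|^2$ on $\partial\Omega$. The regularized problem is $u_{\varepsilon t}=u_\varepsilon\Delta u_\varepsilon+u_\varepsilon\rho_\varepsilon(\int_\Omega|\nabla u_\varepsilon|^2)$ in $\Omega\times(0,\infty)$, $u_\varepsilon=\varepsilon$ on $\partial\Omega$, $u_\varepsilon(\cdot,0)=u_{0\varepsilon}$, with classical solutions in $C^{2,1}(\bar\Omega\times[0,\infty))$.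 *)

(* Defs.v *)
From HB Require Import structures.
From mathcomp Require Import all_boot all_order all_algebra.
From mathcomp Require Import all_classical all_reals all_analysis.
Set Implicit Arguments. Unset Strict Implicit. Unset Printing Implicit Defensive.
Import Order.TTheory GRing.Theory Num.Theory.
Import numFieldNormedType.Exports.
Local Open Scope classical_set_scope.
Local Open Scope ring_scope.

Section Defs.
Variables (R : realType) (N : nat).
Local Notation V := 'rV[R]_N.

Definition evec (i : 'I_N) : V := delta_mx 0 i.
Definition partial (i : 'I_N) (f : V -> R) (x : V) : R := 'D_(evec i) f x.
Definition pderivs (s : seq 'I_N) (f : V -> R) : V -> R := foldr partial f s.
Definition lap (f : V -> R) (x : V) : R := \sum_(i < N) partial i (partial i f) x.
Definition gradsq (f : V -> R) (x : V) : R := \sum_(i < N) (partial i f x) ^+ 2.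
End Defs.
Arguments evec {R N}.
Arguments partial {R N}.
Arguments pderivs {R N}.
Arguments lap {R N}.
Arguments gradsq {R N}.

Fixpoint iint (R : realType) (n : nat) : ('rV[R]_n -> \bar R) -> \bar R :=
  match n with
  | 0 => fun f => f 0
  | n'.+1 => fun f => (\int[@lebesgue_measure R]_x
                         iint (fun v : 'rV[R]_n' => f (row_mx (x%:M) v)))%E
  end.

Section Defs2.
Variables (R : realType) (N : nat).
Local Notation V := 'rV[R]_N.
Local Open Scope classical_set_scope.
Local Open Scope ring_scope.

Definition bdry (Om : set V) : set V := closure Om `\` Om.

Definition smooth (f : V -> R) : Prop :=
  forall s : seq 'I_N, continuous (pderivs s f) /\
    forall x i, derivable (pderivs s f) x (evec i).

Definition smooth_bounded_domain (Om : set V) : Prop :=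
  [/\ open Om, connected Om, Om !=set0, bounded_set Om &
      exists r : V -> R, [/\ smooth r, Om = [set x | r x < 0] &
        forall x, r x = 0 -> exists i, partial i r x != 0]].

Definition torsion_function (Om : set V) (Phi : V -> R) : Prop :=
  [/\ {within closure Om, continuous Phi},
      forall x, Om x -> (forall i, derivable Phi x (evec i)) /\
                        (forall i j, derivable (partial i Phi) x (evec j)),
      forall x, Om x -> - lap Phi x = 1 &
      forall x, bdry Om x -> Phi x = 0].

Definition cont_ext (Om : set V) (g : V -> R) : Prop :=
  exists G : V -> R, {within closure Om, continuous G} /\
    forall x, Om x -> G x = g x.

Definition Ck_closure (k : nat) (Om : set V) (f : V -> R) : Prop :=
  {within closure Om, continuous f} /\
  forall s : seq 'I_N, (size s <= k)%N ->
    (forall x i, Om x -> (size s < k)%N -> derivable (pderivs s f) x (evec i)) /\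
    cont_ext Om (pderivs s f).

Definition cont_ext_t (Om : set V) (F : V -> R -> R) : Prop :=
  exists G : V * R -> R,
    {within closure Om `*` `[0, +oo[, continuous G} /\
    forall x t, Om x -> 0 < t -> G (x, t) = F x t.

Definition dt (u : R -> V -> R) (t : R) (x : V) : R := derive1 (fun s => u s x) t.

Definition C21 (Om : set V) (u : R -> V -> R) : Prop :=
  [/\ {within closure Om `*` `[0, +oo[, continuous (fun p : V * R => u p.2 p.1)},
      forall x t, Om x -> 0 < t ->
        [/\ derivable (fun s => u s x) t 1,
            forall i, derivable (u t) x (evec i) &
            forall i j, derivable (partial i (u t)) x (evec j)],
      cont_ext_t Om (fun x t => dt u t x),
      forall i, cont_ext_t Om (fun x t => partial i (u t) x) &
      forall i j, cont_ext_t Om (fun x t => partial j (partial i (u t)) x)].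

(* Lebesgue integral over R^N (iterated; the integrands used are nonnegative) *)
Definition dirichlet (Om : set V) (f : V -> R) : \bar R :=
  iint (fun x => (\1_Om x * gradsq f x)%:E).

Definition ess_sup_on (Om : set V) (g : V -> \bar R) : \bar R :=
  ereal_inf [set c : \bar R |
    iint (fun x => (\1_[set y | Om y /\ (c < g y)%E] x)%:E) = 0%E].

Definition phinorm (Om : set V) (Phi : V -> R) (v : V -> R) : \bar R :=
  ess_sup_on Om (fun x => (`|v x / Phi x|)%:E).

Definition rho (eps z : R) : R := Order.min z eps^-1.
End Defs2.

(* Main.v *)
Require Import Defs.
From HB Require Import structures.
From mathcomp Require Import all_boot all_order all_algebra.
From mathcomp Require Import all_classical all_reals all_analysis.
From mathcomp Require Import ring lra.
Import Order.TTheory GRing.Theory Num.Theory.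
Import numFieldNormedType.Exports.
Local Open Scope classical_set_scope.
Local Open Scope ring_scope.
Set Implicit Arguments. Unset Strict Implicit. Unset Printing Implicit Defensive.
Lemma setcc (R : realType) (a b x : R) : `[a, b]%classic x = (a <= x <= b).
Proof. by rewrite /= in_itv. Qed.
Lemma setcinf (R : realType) (a x : R) : `[a, +oo[%classic x = (a <= x).
Proof. by rewrite /= in_itv /= andbT. Qed.
Section OneD.
Variable R : realType.

Lemma left_max_deriv (f : R -> R) (t a d : R) : 0 < t -> derivable f t 1 ->
  (forall s, 0 <= s <= t -> a * (f s - f t) <= d * (s - t)) ->
  d <= a * 'D_1 f t.
Proof.
move=> t0 df H.
have dg : derivable (a \*: f) t 1 by apply: derivableZ.
rewrite -[a * _]/(a *: 'D_1 f t) -deriveZ //.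
rewrite ['D_1 (a \*: f) t]cvg_at_leftE; last exact: dg.
apply: limr_ge.
  rewrite -(cvg_at_leftE (fun h : R => h^-1 *: (((a \*: f) \o shift t) _ - (a \*: f) t))) //.
  apply: cvg_trans dg; apply: cvg_app.
  move=> A [e egt0 Ae]; exists e => // x xe xgt0; apply: Ae => //.
  exact/ltr0_neq0.
near=> h.
have hneg : h < 0 by near: h; exists 1 => //=.
have ht : - t < h.
  near: h; exists t => //= h; rewrite /ball /= sub0r normrN => /ltr_normlP [] ? ? ?; lra.
have := H (h + t); rewrite /= [_%:A]mulr1.
have -> : (h + t - t) = h by lra.
move=> /(_ _) Hh.
have {}Hh : a * (f (h + t) - f t) <= d * h by apply: Hh; apply/andP; split; lra.
rewrite /GRing.scale /= -mulrBr.
rewrite -(@ler_nM2l _ h) //.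
by rewrite mulVKf ?ltr0_neq0 // [h * d]mulrC.
Unshelve. all: by end_near. Qed.

End OneD.
Section OneD2.
Variable R : realType.

Lemma sd_test (g g1 : R -> R) (d r : R) : 0 < r ->
  (forall h, `|h| < r -> g h <= g 0) ->
  (forall h : R, `|h| < r -> is_derive h (1:R) g (g1 h)) ->
  is_derive (0:R) (1:R) g1 d -> d <= 0.
Proof.
move=> r0 gmax gder Hd.
have g10 : g1 0 = 0.
  have H0 : is_derive (0:R) (1:R) g (0:R).
    apply: (@derive1_at_max _ g (- r) r 0).
    - lra.
    - move=> t; rewrite in_itv /= => /andP [? ?].
      have : `|t| < r by rewrite ltr_norml; apply/andP; split.
      by move/gder => [].
    - by rewrite in_itv /=; apply/andP; split; lra.
    - move=> t; rewrite in_itv /= => /andP [? ?]; apply: gmax.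
      by rewrite ltr_norml; apply/andP; split.
  have := @derive_val _ _ _ _ _ _ _ H0.
  have := @derive_val _ _ _ _ _ _ _ (gder 0 _); rewrite normr0 => /(_ r0) <-.
  by [].
rewrite leNgt; apply/negP => dpos.
have Hq : (fun h : R => h^-1 *: ((g1 \o shift 0) (h *: 1) - g1 0)) @ 0^' --> d.
  rewrite -(@derive_val _ _ _ _ _ _ _ Hd).
  exact: (@ex_derive _ _ _ _ _ _ _ Hd).
have d2 : d / 2 < d by lra.
have := cvgr_gt _ Hq (d / 2) d2.
move=> [e /= e0 He].
pose h0 := Order.min e r / 2.
have h00 : 0 < h0 by rewrite /h0 divr_gt0 // lt_min e0 r0.
have m1 : Order.min e r <= e by rewrite ge_min lexx.
have m2 : Order.min e r <= r by rewrite ge_min lexx orbT.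
have m3 : 0 < Order.min e r by rewrite lt_min e0 r0.
have h0e : h0 < e by rewrite /h0; lra.
have h0r : h0 < r by rewrite /h0; lra.
have S1 : forall x, x \in `]0, h0[ -> is_derive x (1:R) g (g1 x).
  move=> x; rewrite in_itv /= => /andP [? ?]; apply: gder.
  by rewrite ger0_norm; lra.
have S2 : {within `[0, h0], continuous g}.
  apply: derivable_within_continuous => x; rewrite in_itv /= => /andP [? ?].
  have : `|x| < r by rewrite ger0_norm; lra.
  by move/gder => [].
have [c cI Hc] := @MVT R g g1 0 h0 h00 S1 S2.
move: cI; rewrite in_itv /= => /andP [c0 ch0].
have := He c.
rewrite /ball /= sub0r normrN ger0_norm; last lra.
move=> /(_ _ _); have cne : c != 0 by rewrite gt_eqF.
move=> /(_ ltac:(lra) cne).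
rewrite /= [c *: 1]mulr1 addr0 g10 subr0 /GRing.scale /=.
move=> Hc2.
have g1c : 0 < g1 c.
  have : 0 < c^-1 * g1 c by lra.
  by rewrite pmulr_rgt0 // invr_gt0.
have := gmax h0; rewrite ger0_norm; last lra.
move=> /(_ h0r); rewrite -subr_le0 Hc subr0.
have : 0 < g1 c * h0 by rewrite mulr_gt0.
lra.
Qed.

End OneD2.
Section Spatial.
Variable R : realType.

Lemma line_deriv (V : normedModType R) (f : V -> R) (x v : V) (h0 : R) :
  derivable f (h0 *: v + x) v ->
  is_derive h0 (1:R) (fun h : R => f (h *: v + x)) ('D_v f (h0 *: v + x)).
Proof.
move=> df.
have E : (fun k : R => k^-1 *: (((fun h : R => f (h *: v + x)) \o shift h0) (k *: 1) - f (h0 *: v + x)))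
  = (fun k : R => k^-1 *: ((f \o shift (h0 *: v + x)) (k *: v) - f (h0 *: v + x))).
  apply: funext => k /=; congr (_ *: (f _ - _)).
  by rewrite [k%:A]mulr1 scalerDl addrA.
apply: DeriveDef; first by rewrite /derivable E.
by rewrite /derive E.
Qed.

Lemma box_ball m n (x y : 'M[R]_(m, n)) (r : R) : 0 < r ->
  (forall i j, `|x i j - y i j| < r) -> ball x r y.
Proof.
move=> r0 H; rewrite -ball_normE /=; change (mx_norm (x - y) < r); rewrite mx_normrE.
apply: Order.PreorderTheory.bigmax_lt => // ij _.
by rewrite !mxE; apply: H.
Qed.

Lemma line_in_ball N (x : 'rV[R]_N) (i : 'I_N) (h r : R) : `|h| < r ->
  ball x r (h *: evec i + x).
Proof.
move=> hr; apply: box_ball; first by apply: le_lt_trans hr.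
move=> a b; rewrite /evec !mxE.
rewrite opprD addrCA subrr addr0 normrN normrM.
case: (_ && _) => /=; first by rewrite normr1 mulr1.
by rewrite normr0 mulr0; apply: le_lt_trans hr.
Qed.

Lemma spatial_max N (Om : set 'rV[R]_N) (f1 f2 : 'rV[R]_N -> R) (a b : R) x :
  open Om -> Om x ->
  (forall y i, Om y -> derivable f1 y (evec i)) ->
  (forall y i, Om y -> derivable f2 y (evec i)) ->
  (forall i, derivable (partial i f1) x (evec i)) ->
  (forall i, derivable (partial i f2) x (evec i)) ->
  (forall y, Om y -> a * f1 y - b * f2 y <= a * f1 x - b * f2 x) ->
  a * lap f1 x - b * lap f2 x <= 0.
Proof.
move=> oOm Omx d1 d2 dd1 dd2 Hmax.
have [r r0 Hr] : exists2 r : R, 0 < r & ball x r `<=` Om.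
  by have := oOm x Omx; rewrite /= => /nbhs_ballP [r /= r0 H]; exists r.
rewrite /lap !mulr_sumr -sumrB; apply: sumr_le0 => i _.
pose e : 'rV[R]_N := evec i.
pose F1 := fun h : R => f1 (h *: e + x).
pose F2 := fun h : R => f2 (h *: e + x).
pose P1 := fun h : R => partial i f1 (h *: e + x).
pose P2 := fun h : R => partial i f2 (h *: e + x).
pose g := a \*: F1 - b \*: F2.
pose g1 := a \*: P1 - b \*: P2.
have inOm h : `|h| < r -> Om (h *: e + x) by move=> hr; apply: Hr; apply: line_in_ball.
have gder h : `|h| < r -> is_derive h (1:R) g (g1 h).
  move=> hr.
  have D1 := line_deriv (d1 _ i (inOm h hr)).
  have D2 := line_deriv (d2 _ i (inOm h hr)).
  apply: DeriveDef.
    by apply: derivableB; apply: derivableZ; [exact: (@ex_derive _ _ _ _ _ _ _ D1)|exact: (@ex_derive _ _ _ _ _ _ _ D2)].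
  rewrite deriveB; [|apply: derivableZ; exact: (@ex_derive _ _ _ _ _ _ _ D1)|apply: derivableZ; exact: (@ex_derive _ _ _ _ _ _ _ D2)].
  rewrite !deriveZ; [|exact: (@ex_derive _ _ _ _ _ _ _ D2)|exact: (@ex_derive _ _ _ _ _ _ _ D1)].
  by rewrite (@derive_val _ _ _ _ _ _ _ D1) (@derive_val _ _ _ _ _ _ _ D2).
have Hd : is_derive (0:R) (1:R) g1 (a * partial i (partial i f1) x - b * partial i (partial i f2) x).
  have E1 : derivable (partial i f1) (0 *: e + x) e by rewrite scale0r add0r; exact: dd1.
  have E2 : derivable (partial i f2) (0 *: e + x) e by rewrite scale0r add0r; exact: dd2.
  have D1 := line_deriv E1.
  have D2 := line_deriv E2.
  apply: DeriveDef.
    by apply: derivableB; apply: derivableZ; [exact: (@ex_derive _ _ _ _ _ _ _ D1)|exact: (@ex_derive _ _ _ _ _ _ _ D2)].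
  rewrite deriveB; [|apply: derivableZ; exact: (@ex_derive _ _ _ _ _ _ _ D1)|apply: derivableZ; exact: (@ex_derive _ _ _ _ _ _ _ D2)].
  rewrite !deriveZ; [|exact: (@ex_derive _ _ _ _ _ _ _ D2)|exact: (@ex_derive _ _ _ _ _ _ _ D1)].
  rewrite (@derive_val _ _ _ _ _ _ _ D1) (@derive_val _ _ _ _ _ _ _ D2).
  by rewrite scale0r add0r.
apply: (sd_test r0 _ gder Hd).
move=> h hr; change (a * f1 (h *: e + x) - b * f2 (h *: e + x) <= a * f1 (0 *: e + x) - b * f2 (0 *: e + x)); rewrite scale0r add0r.
exact: Hmax (inOm h hr).
Qed.

End Spatial.
Section Cont.
Variable R : realType.

Lemma within_fst {T U : topologicalType} (A : set (T * U)) (B : set T) (f : T -> R) :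
  (forall p, A p -> B p.1) -> {within B, continuous f} ->
  {within A, continuous (fun p => f p.1)}.
Proof.
move=> AB /subspace_continuousP cf; apply/subspace_continuousP => p Ap.
move=> W /(cf p.1 (AB p Ap)) H.
rewrite /within /=. 
exists ((fun y => B y -> W (f y)), setT) => //=; first by split => //; exact: filterT.
by case=> y z [/= Hy _] Ayz; apply: Hy; apply: (AB (y, z)).
Qed.

Lemma within_snd {T U : topologicalType} (A : set (T * U)) :
  {within A, continuous (@snd T U)}.
Proof.
apply/subspace_continuousP => p Ap W HW.
rewrite /within /=.
exists (setT, W) => //=; first by split => //; exact: filterT.
by case=> y z [/= _ Hz].
Qed.

End Cont.
Section Compact.
Variable R : realType.

Lemma closure_bounded N (Om : set 'rV[R]_N) : bounded_set Om -> bounded_set (closure Om).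
Proof.
move=> [M0 [M0r HM]]; exists (M0 + 1); split; first by rewrite realD ?real1.
move=> M M0M x clx.
have [y [Omy xy]] := clx _ (nbhsx_ballx x 1 (@ltr01 R)).
have := HM (M - 1) ltac:(lra) y Omy.
move: xy; rewrite -ball_normE /= => xy Hy.
have := ler_normB x (x - y); rewrite opprB addrC subrK.
move: (normrN (x - y)); rewrite opprB => E.
have : `|x| <= `|y| + `|x - y|.
  by have := ler_normD y (x - y); rewrite addrC subrK.
lra.
Qed.

End Compact.
Section MPsec.
Variable R : realType.

Lemma MP N (Om : set 'rV[R]_N) (Phi : 'rV[R]_N -> R) (u : R -> 'rV[R]_N -> R)
  (a b dl c0 tau : R) :
  open Om -> bounded_set Om -> Om !=set0 ->
  {within closure Om `*` `[0, +oo[, continuous (fun p : 'rV[R]_N * R => u p.2 p.1)} ->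
  {within closure Om, continuous Phi} ->
  (forall x, Om x -> (forall i, derivable Phi x (evec i)) /\
                     (forall i j, derivable (partial i Phi) x (evec j))) ->
  (forall x t, Om x -> 0 < t ->
        [/\ derivable (fun s => u s x) t 1,
            forall i, derivable (u t) x (evec i) &
            forall i j, derivable (partial i (u t)) x (evec j)]) ->
  0 <= tau ->
  (forall x t, Om x -> 0 < t <= tau -> 0 < a * u t x - b * Phi x - dl * t - c0 ->
     a * lap (u t) x - b * lap Phi x <= 0 -> dl <= a * dt u t x -> False) ->
  (forall x t, closure Om x -> 0 <= t <= tau -> (~ Om x \/ t = 0) ->
     a * u t x - b * Phi x - dl * t - c0 <= 0) ->
  forall x t, closure Om x -> 0 <= t <= tau -> a * u t x - b * Phi x - dl * t - c0 <= 0.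
Proof.
move=> oOm bOm [x0 Omx0] cu cPhi dPhi du tau0 Hint Hbd.
pose A := closure Om `*` `[0, tau].
pose G := fun p : 'rV[R]_N * R => a * u p.2 p.1 - b * Phi p.1 - dl * p.2 - c0.
have A0 : A !=set0.
  exists (x0, 0); split; first exact: subset_closure.
  by rewrite /= in_itv /= lexx.
have cA : compact A.
  apply: compact_setX; last exact: segment_compact.
  apply: bounded_closed_compact; last exact: closed_closure.
  exact: closure_bounded.
have AC : A `<=` closure Om `*` `[0, +oo[.
  move=> [y s] [/= Cy]; rewrite in_itv /= => /andP [s0 _]; split => //.
  by rewrite in_itv /= s0.
have cuA := continuous_subspaceW AC cu.
have cPhiA : {within A, continuous (fun p : 'rV[R]_N * R => Phi p.1)}.
  by apply: within_fst cPhi => p [].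
have csA := @within_snd _ _ A.
have cG : {within A, continuous G}.
  rewrite continuous_subspace_in => p pA.
  apply: cvgB; last exact: cvg_cst.
  apply: cvgB; [apply: cvgB|].
  - apply: cvgM; [exact: cvg_cst|exact: cuA].
  - apply: cvgM; [exact: cvg_cst|exact: cPhiA].
  - apply: cvgM; [exact: cvg_cst|exact: csA].
have [[xs ts] cin cmax] := compact_EVT_max A0 cA cG.
move: (cin); rewrite inE => -[/= Cxs]; rewrite /= in_itv /= => /andP [ts0 tst].
have Gc : G (xs, ts) <= 0.
  rewrite leNgt; apply/negP => Gpos.
  have [Omxs|nOm] := pselect (Om xs); last first.
    by move: Gpos; rewrite ltNge /G /= Hbd //; [rewrite ts0|left].
  have [ts_pos|] := ltP 0 ts; last first.
    move=> ts_le0; have ts_eq : ts = 0 by apply/eqP; rewrite eq_le ts_le0 ts0.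
    by move: Gpos; rewrite ltNge /G /= Hbd //; [rewrite ts0|right].
  have [dt1 du1 du2] := du xs ts Omxs ts_pos.
  have [dP1 dP2] := dPhi xs Omxs.
  apply: (Hint xs ts Omxs _ Gpos).
  - by rewrite ts_pos.
  - apply: (spatial_max oOm Omxs).
    + by move=> y i Omy; have [_ ? _] := du y ts Omy ts_pos.
    + by move=> y i Omy; have [? _] := dPhi y Omy.
    + by move=> i; apply: du2.
    + by move=> i; apply: dP2.
    + move=> y Omy.
      have := cmax (y, ts); rewrite /G /= => H.
      have : a * u ts y - b * Phi y - dl * ts - c0 <= a * u ts xs - b * Phi xs - dl * ts - c0.
        apply: H; rewrite inE; split; first exact: subset_closure.
        by rewrite /= in_itv /= ts0.
      lra.
  - rewrite /dt derive1E.
    apply: left_max_deriv => //.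
    move=> s /andP [s0 sts].
    have := cmax (xs, s); rewrite /G /= => H.
    have : a * u s xs - b * Phi xs - dl * s - c0 <= a * u ts xs - b * Phi xs - dl * ts - c0.
      apply: H; rewrite inE; split => //.
      by rewrite /= in_itv /= s0 /=; apply: le_trans tst.
    lra.
move=> x t Cx /andP [t0 tt].
have := cmax (x, t); rewrite /G /= => H.
have : a * u t x - b * Phi x - dl * t - c0 <= G (xs, ts).
  apply: H; rewrite inE; split => //.
  by rewrite /= in_itv /= t0.
lra.
Qed.

End MPsec.
Section Meas.
Variable R : realType.
Local Open Scope ereal_scope.

Lemma int_le_nonneg (f g : R -> \bar R) : (forall x, 0 <= f x) ->
  (forall x, f x <= g x) ->
  \int[@lebesgue_measure R]_x f x <= \int[@lebesgue_measure R]_x g x.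
Proof.
move=> f0 fg.
have g0 x : 0 <= g x by apply: le_trans (fg x).
rewrite !ge0_integralE //.
apply: ereal_sup_le => _ [h /= hf <-]; exists h => //= x.
by apply: le_trans (hf x) _; rewrite !patch_setT.
Qed.

Lemma iint_ge0 n (f : 'rV[R]_n -> \bar R) : (forall x, 0 <= f x) -> 0 <= iint f.
Proof.
elim: n f => [|n IH] f f0 /=; first exact: f0.
apply: integral_ge0 => x _; apply: IH => v; exact: f0.
Qed.

Lemma iint_le n (f g : 'rV[R]_n -> \bar R) : (forall x, 0 <= f x) ->
  (forall x, f x <= g x) -> iint f <= iint g.
Proof.
elim: n f g => [|n IH] f g f0 fg /=; first exact: fg.
apply: int_le_nonneg => x; first by apply: iint_ge0 => v; exact: f0.
by apply: IH => v; [exact: f0|exact: fg].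
Qed.

Lemma iint0 n : iint (fun _ : 'rV[R]_n => 0) = 0.
Proof.
elim: n => [|n IH] //=.
rewrite (_ : (fun x : R => _) = cst 0); first by rewrite integral0.
by apply: funext => x; rewrite IH.
Qed.

End Meas.
Section Box.
Variable R : realType.

Definition box n (c : 'rV[R]_n) (r : R) : set 'rV[R]_n :=
  [set y | forall k, `|y ord0 k - c ord0 k| < r].

Lemma box_row n (c : 'rV[R]_(1 + n)) r (x : R) (v : 'rV[R]_n) :
  box c r (row_mx x%:M v) <->
  (`|x - c ord0 (@lshift 1 n ord0)| < r /\ box (\row_k c ord0 (rshift 1 k)) r v).
Proof.
split.
  move=> H; split.
    by have := H (lshift n ord0); rewrite row_mxEl mxE eqxx mulr1n.
  by move=> k; have := H (rshift 1 k); rewrite row_mxEr mxE.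
move=> [H1 H2] k; rewrite -(splitK k); case: (fintype.split k) => j /=.
  by rewrite row_mxEl mxE (ord1 j) eqxx mulr1n.
by rewrite row_mxEr; have := H2 j; rewrite mxE.
Qed.

Local Open Scope ereal_scope.

Lemma iint_box n (c : 'rV[R]_n) (r : R) : (0 < r)%R ->
  iint (fun y => (\1_(box c r) y)%:E) = ((r *+ 2) ^+ n)%:E.
Proof.
move=> r0; elim: n c => [|n IH] c /=.
  rewrite indicE mem_set ?expr0 // => k; case: k => //.
pose I := [set x : R | `|x - c ord0 (@lshift 1 n ord0)| < r]%R.
pose C := ((r *+ 2) ^+ n)%R.
have E : (fun x : R => iint (fun v : 'rV[R]_n => (\1_(box c r) (row_mx x%:M v))%:E))
    = (fun x => (C * \1_((fun _ : R => I) C) x)%:E).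
  apply: funext => x.
  have [Ix|nIx] := pselect (I x).
    rewrite indicE mem_set // mulr1 -(IH (\row_k c ord0 (rshift 1 k))).
    congr iint; apply: funext => v.
    have [Hb|Hb] := pselect (box (\row_k c ord0 (rshift 1 k)) r v).
      by rewrite !indicE !mem_set //; exact/box_row.
    by rewrite !indicE !memNset // => /box_row [].
  rewrite indicE memNset // mulr0.
  rewrite -[RHS](iint0 R n); congr iint; apply: funext => v.
  rewrite indicE memNset //.
  by move=> /box_row [].
have EI : I = `](c ord0 (@lshift 1 n ord0) - r)%R, (c ord0 (@lshift 1 n ord0) + r)%R[%classic.
    by apply: funext => x; apply: propext; rewrite /I /= in_itv /= distrC ltr_distlC.
have mI : measurable I by rewrite EI; exact: measurable_itv.
have C0 : (0 <= C)%R by rewrite /C exprn_ge0 // mulrn_wge0 // ltW.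
have HZ := @integralZl_indic _ _ R (@lebesgue_measure R) setT measurableT (fun _ => I) C.
rewrite E HZ //; last by move=> C0'; exfalso; move: C0'; rewrite ltNge C0.
rewrite integral_indic // setIT EI.
set a := (c ord0 (@lshift 1 n ord0) - r)%R.
set b := (c ord0 (@lshift 1 n ord0) + r)%R.
have HL := @lebesgue_measure_itv R `]a, b[.
rewrite /= lte_fin ifT in HL; last by rewrite /a /b ltrD2l gtrN.
set m := (X in _ * X = _).
have -> : m = (b%:E - a%:E) by exact: HL.
rewrite -EFinB -EFinM; congr (_%:E).
rewrite /a /b.
rewrite exprS /C; ring.
Qed.

End Box.
Section Ess.
Variable R : realType.

Lemma within_int N (Om : set 'rV[R]_N) (f : 'rV[R]_N -> R) x0 :
  open Om -> Om x0 -> {within closure Om, continuous f} -> f @ nbhs x0 --> f x0.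
Proof.
move=> oOm Omx0 /subspace_continuousP cf.
have Cx0 : closure Om x0 by exact: subset_closure.
have := cf x0 Cx0; rewrite within_interior //.
rewrite /interior; apply: filterS (subset_closure (A:=Om)) _.
exact: (oOm x0 Omx0).
Qed.

Lemma open_sup N (Om : set 'rV[R]_N) (v Phi : 'rV[R]_N -> R) x0 c :
  open Om -> Om x0 -> {within closure Om, continuous v} ->
  {within closure Om, continuous Phi} -> 0 <= c -> c < `|v x0 / Phi x0| ->
  exists2 r, 0 < r & ball x0 r `<=` [set y | Om y /\ c < `|v y / Phi y|].
Proof.
move=> oOm Omx0 cv cP c0 cg.
have P0 : Phi x0 != 0.
  by apply/negP => /eqP P0; move: cg; rewrite P0 invr0 mulr0 normr0 ltNge c0.
have H : (fun y => `|v y / Phi y|) @ nbhs x0 --> `|v x0 / Phi x0|.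
  apply: cvg_norm; apply: cvgM; first exact: within_int cv.
  by apply: cvgV => //; exact: within_int cP.
have := cvgr_gt _ H c cg.
move=> Hn.
have Hn2 : nbhs x0 (fun y => Om y /\ c < `|v y / Phi y|).
  apply: filterI; last exact: Hn.
  have := oOm x0 Omx0; rewrite /= => /nbhs_ballP [r /= r0 Hr].
  by apply/nbhs_ballP; exists r.
by move: Hn2 => /nbhs_ballP [r /= r0 Hr]; exists r.
Qed.

Lemma phinorm_le N (Om : set 'rV[R]_N) (Phi v : 'rV[R]_N -> R) (K : R) :
  (forall x, Om x -> `|v x / Phi x| <= K) -> (phinorm Om Phi v <= K%:E)%E.
Proof.
move=> H; rewrite /phinorm /ess_sup_on.
apply: ge_ereal_inf; exists K%:E => //=.
rewrite -[RHS](iint0 R N); congr iint; apply: funext => y.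
rewrite indicE memNset //= => -[Omy].
by rewrite lte_fin ltNge H.
Qed.

Lemma phinorm_ge N (Om : set 'rV[R]_N) (Phi v : 'rV[R]_N -> R) (x0 : 'rV[R]_N) (c r : R) :
  0 < r -> ball x0 r `<=` [set y | Om y /\ c < `|v y / Phi y|] ->
  (c%:E <= phinorm Om Phi v)%E.
Proof.
move=> r0 Hb; rewrite leNgt; apply/negP => /ereal_inf_lt [c' /= Hc' c'c].
have Hbox : box x0 r `<=` [set y | Om y /\ (c' < (`|v y / Phi y|)%:E)%E].
  move=> y By.
  have By' : ball x0 r y by apply: box_ball => // i j; rewrite (ord1 i) distrC; exact: By.
  have [Omy cy] := Hb y By'.
  by split => //; apply: lt_trans c'c _; rewrite lte_fin.
have : (iint (fun y => (\1_(box x0 r) y)%:E) <=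
        iint (fun y => (\1_[set y | Om y /\ (c' < (`|v y / Phi y|)%:E)%E] y)%:E))%E.
  apply: iint_le => y; first by rewrite lee_fin.
  rewrite lee_fin; have [By|nBy] := pselect (box x0 r y).
    by rewrite !indicE !mem_set //; exact: Hbox.
  by rewrite [X in (X <= _)%R]indicE memNset //= indic_ge0.
rewrite Hc' iint_box // lee_fin leNgt => /negP; apply.
by apply: exprn_gt0; rewrite mulrn_wgt0.
Qed.

End Ess.
Section PhiPos.
Variable R : realType.

Lemma Phi_pos N (Om : set 'rV[R]_N) (Phi : 'rV[R]_N -> R) :
  open Om -> bounded_set Om -> Om !=set0 -> {within closure Om, continuous Phi} ->
  (forall x, Om x -> (forall i, derivable Phi x (evec i)) /\
                     (forall i j, derivable (partial i Phi) x (evec j))) ->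
  (forall x, Om x -> lap Phi x = -1) ->
  (forall x, bdry Om x -> Phi x = 0) ->
  forall x, Om x -> 0 < Phi x.
Proof.
move=> oOm bOm [y0 Omy0] cP dP lP bP.
have key : forall x, Om x -> (forall y, Om y -> Phi x <= Phi y) -> False.
  move=> x Omx Hx.
  have := @spatial_max R N Om Phi Phi 0 1 x oOm Omx.
  have H1 : forall y i, Om y -> derivable Phi y (evec i) by move=> y i /dP [].
  have H2 : forall i, derivable (partial i Phi) x (evec i) by move=> i; have [_ ?] := dP x Omx.
  move=> /(_ H1 H1 H2 H2) H.
  have : 0 * lap Phi x - 1 * lap Phi x <= 0.
    apply: H => y Omy; have := Hx y Omy; lra.
  rewrite lP //; lra.
have C0 : closure Om !=set0 by exists y0; exact: subset_closure.
have cC : compact (closure Om).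
  by apply: bounded_closed_compact; [exact: closure_bounded|exact: closed_closure].
have [xm xmC xmin] := compact_EVT_min C0 cC cP.
have nOm : ~ Om xm.
  move=> Omxm; apply: (key xm Omxm) => y Omy; apply: xmin.
  by rewrite inE; exact: subset_closure.
have Pm : Phi xm = 0 by apply: bP; split => //; move: xmC; rewrite inE.
have Pge0 : forall x, Om x -> 0 <= Phi x.
  move=> x Omx; rewrite -Pm; apply: xmin; rewrite inE; exact: subset_closure.
move=> x Omx; rewrite lt_neqAle Pge0 // andbT; apply/negP => /eqP Px0.
apply: (key x Omx) => y Omy; rewrite -Px0; exact: Pge0.
Qed.

End PhiPos.
Section FirstTime.
Variable R : realType.

Lemma closedX' {T U : topologicalType} (A : set T) (B : set U) :
  closed A -> closed B -> closed (A `*` B).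
Proof.
move=> cA cB [p q] clp; split => /=.
  apply: cA => W nW.
  have [[y z] [[Ay Bz] /= [Wy _]]] : (A `*` B) `&` (W `*` setT) !=set0.
    apply: clp; exists (W, setT) => //=; split => //; exact: filterT.
  by exists y.
apply: cB => W nW.
have [[y z] [[Ay Bz] /= [_ Wz]]] : (A `*` B) `&` (setT `*` W) !=set0.
  apply: clp; exists (setT, W) => //=; split => //; exact: filterT.
by exists z.
Qed.

Lemma closed_le {T : topologicalType} (B A : set T) (f : T -> R) c :
  {within B, continuous f} -> closed A -> A `<=` B ->
  closed (A `&` [set p | f p <= c]).
Proof.
move=> /subspace_continuousP cf cA AB p clp.
have Ap : A p.
  apply: cA => W nW; have [q [[Aq _] Wq]] := clp W nW; by exists q.
split => //=; rewrite leNgt; apply/negP => fpc.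
have Hn := cvgr_gt _ (cf p (AB p Ap)) c fpc.
have Hn' : nbhs p (fun q => B q -> c < f q) by exact: Hn.
have [q [[Aq fq] Hq]] := clp _ Hn'; move: fq (Hq (AB q Aq)) => /= fq Hq'; lra.
Qed.

Lemma ge_within {T : topologicalType} (B : set T) (f : T -> R) c p :
  {within B, continuous f} -> B p ->
  (forall W, nbhs p W -> exists q, [/\ B q, W q & c <= f q]) -> c <= f p.
Proof.
move=> /subspace_continuousP cf Bp H; rewrite leNgt; apply/negP => fpc.
have Hn := cvgr_lt _ (cf p Bp) c fpc.
have Hn' : nbhs p (fun q => B q -> f q < c) by exact: Hn.
have [q [Bq /(_ Bq) ? ?]] := H _ Hn'; lra.
Qed.

End FirstTime.
Section FirstTime2.
Variable R : realType.

Lemma first_time N (C : set 'rV[R]_N) (w : 'rV[R]_N * R -> R) (T c : R) :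
  compact C -> closed C -> {within C `*` `[0, +oo[, continuous w} -> 0 <= T ->
  (forall x, C x -> c < w (x, 0)) ->
  (exists x t, [/\ C x, 0 <= t <= T & w (x, t) <= c]) ->
  exists x1 s1, [/\ C x1, 0 < s1 <= T, w (x1, s1) <= c &
                   forall x s, C x -> 0 <= s <= s1 -> c <= w (x, s)].
Proof.
move=> cC clC cw T0 H0 [xa [ta [Cxa ta0 wa]]].
pose A := C `*` `[0, T].
have AB : A `<=` C `*` `[0, +oo[.
  move=> [y s] [/= Cy]; rewrite in_itv /= => /andP [s0 _]; split => //.
  by rewrite in_itv /= s0.
pose Z := A `&` [set p | w p <= c].
have clA : closed A.
  apply: closedX' => //.
  exact: interval_closed.
have clZ : closed Z by exact: (closed_le (c:=c) cw clA AB).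
have cZ : compact Z.
  apply: (subclosed_compact clZ (compact_setX cC (@segment_compact R 0 T))).
  by move=> p [].
have Z0 : Z !=set0 by exists (xa, ta); split => //; split => //=; rewrite in_itv /=.
have [[x1 s1] Zp smin] := compact_EVT_min Z0 cZ (@within_snd _ _ Z).
move: Zp; rewrite inE => -[[/= Cx1]]; rewrite in_itv /= => /andP [s10 s1T] /= w1.
have s1pos : 0 < s1.
  rewrite lt_neqAle s10 andbT; apply/negP => /eqP s1e.
  by move: w1; rewrite -s1e leNgt H0.
have before : forall x s, C x -> 0 <= s < s1 -> c < w (x, s).
  move=> x s Cx /andP [s0 ss1]; rewrite ltNge; apply/negP => wxs.
  have : s1 <= s.
    have := smin (x, s); rewrite /=; apply; rewrite inE; split => //; split => //=.
    by rewrite in_itv /= s0 /=; lra.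
  lra.
exists x1, s1; split => //; first by rewrite s1pos.
move=> x s Cx /andP [s0 ss1].
have [lts|] := ltP s s1; first by apply: ltW; apply: before => //; rewrite s0.
move=> s1s; have ses : s = s1 by lra.
rewrite ses.
apply: (ge_within cw).
  by split => //=; rewrite in_itv /= s10.
move=> W [[W1 W2] /= [nW1 nW2] sW].
have := nW2; rewrite /= => /nbhs_ballP [e /= e0 He].
pose s' := s1 - Order.min e s1 / 2.
have m1 : Order.min e s1 <= e by rewrite ge_min lexx.
have m2 : Order.min e s1 <= s1 by rewrite ge_min lexx orbT.
have m3 : 0 < Order.min e s1 by rewrite lt_min e0 s1pos.
exists (x, s'); split.
- by split => //=; rewrite in_itv /= /s'; lra.
- apply: sW; split => /=; first exact: nbhs_singleton.
  apply: He; rewrite /ball /= /s' opprB addrC subrK ger0_norm; lra.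
- apply: ltW; apply: before => //; rewrite /s'; apply/andP; split; lra.
Qed.

End FirstTime2.
Unset Implicit Arguments. Set Strict Implicit.

Theorem lemma2p7 (R : realType) (N : nat) (Om : set 'rV[R]_N) (Phi : 'rV[R]_N -> R)
  (epsj : nat -> R) (j : nat) (u0 : 'rV[R]_N -> R) (u : R -> 'rV[R]_N -> R)
  (T M : R) :
  (0 < N)%N ->
  smooth_bounded_domain Om ->
  torsion_function Om Phi ->
  (forall k, 0 < epsj k < 1) ->
  (forall k, epsj k.+1 < epsj k) ->
  epsj @ \oo --> 0 ->
  (* standing assumptions on the initial datum u_{0 eps} for eps = epsj j *)
  Ck_closure 3 Om u0 ->
  (forall x, Om x -> epsj j <= u0 x) ->
  (forall x, bdry Om x -> u0 x = epsj j) ->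
  (forall x, bdry Om x ->
     lap u0 @ within Om (nbhs x) --> - fine (dirichlet Om u0)) ->
  (* hypotheses of the lemma *)
  0 < T -> 0 < M ->
  Order.lt (phinorm Om Phi (fun x => u0 x - epsj j)) +oo%E ->
  (* u is a classical solution of the regularized problem *)
  C21 Om u ->
  (forall x t, Om x -> 0 < t ->
     dt u t x = u t x * lap (u t) x
                + u t x * rho (epsj j) (fine (dirichlet Om (u t)))) ->
  (forall x t, bdry Om x -> 0 < t -> u t x = epsj j) ->
  (forall x, closure Om x -> u 0 x = u0 x) ->
  (forall t, 0 <= t <= T -> Order.le (dirichlet Om (u t)) M%:E) ->
  forall t, 0 <= t <= T ->
    Order.le (phinorm Om Phi (fun x => u t x - epsj j))
       (Order.max M%:E (phinorm Om Phi (fun x => u0 x - epsj j))).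
Proof.
move=> N0 [oOm _ Om0 bOm _] [cPhi dPhi lPhi0 bPhi] epsj01 _ _ [cu0 _] u0ge u0bd _ T0 M0
  normfin [cu du _ _ _] pde ubd uinit dirM.
set eps := epsj j.
have eps0 : 0 < eps by have /andP [] := epsj01 j.
have lPhi : forall x, Om x -> lap Phi x = -1 by move=> x /lPhi0; lra.
have Ppos := Phi_pos oOm bOm Om0 cPhi dPhi lPhi bPhi.
have inC : forall x, Om x -> closure Om x by move=> x; exact: subset_closure.
have bdC : forall x, closure Om x -> ~ Om x -> bdry Om x by move=> x Cx nOm; split.
have u0C : forall x, closure Om x -> eps <= u0 x.
  move=> x Cx; have [Omx|nOm] := pselect (Om x); first exact: u0ge.
  by rewrite u0bd //; exact: bdC.
pose rh t := rho eps (fine (dirichlet Om (u t))).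
have Hrho : forall t, 0 <= t <= T -> 0 <= rh t /\ rh t <= M.
  move=> s sT; have D0 : (0 <= dirichlet Om (u s))%E.
    apply: iint_ge0 => x; rewrite lee_fin; apply: mulr_ge0; first by rewrite indicE ler0n.
    by apply: sumr_ge0 => i _; exact: sqr_ge0.
  have DM := dirM s sT.
  have [z [zE z0 zM]] : exists z, [/\ dirichlet Om (u s) = z%:E, 0 <= z & z <= M].
    move: D0 DM; case: (dirichlet Om (u s)) => [z| |] //= z0 zM.
    by exists z; split => //; rewrite -lee_fin.
  rewrite /rh /rho zE /=; split.
    by rewrite le_min z0 invr_ge0 ltW.
  by apply: le_trans zM; rewrite ge_min lexx.
set L := phinorm Om Phi (fun x => u0 x - eps).
pose K := Order.max M (fine L).
have KM : M <= K by rewrite le_max lexx.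
have K0 : 0 <= K by lra.
have Lfacts : forall L' : \bar R, (L' < +oo)%E ->
    (L' <= (Order.max M (fine L'))%:E)%E /\ ((Order.max M (fine L'))%:E <= Order.max M%:E L')%E.
  case=> [r| |] //= _; split.
  - by rewrite lee_fin le_max lexx orbT.
  - by rewrite EFin_max.
  - by rewrite leNye.
  - rewrite le_max; apply/orP; left; rewrite lee_fin ge_max lexx /=; apply/ltW; lra.
have [LK KL] := Lfacts L normfin.
have cv0 : {within closure Om, continuous (fun y => u0 y - eps)}.
  rewrite continuous_subspace_in => p pC; apply: cvgB; [exact: cu0|exact: cvg_cst].
have StepB : forall x, Om x -> u0 x - eps <= K * Phi x.
  move=> x Omx.
  have gK : `|(u0 x - eps) / Phi x| <= K.
    rewrite leNgt; apply/negP => gx.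
    pose c := (`|(u0 x - eps) / Phi x| + K) / 2.
    have [r r0 Hb] := @open_sup R N Om (fun y => u0 y - eps) Phi x c oOm Omx cv0 cPhi
      ltac:(rewrite /c; lra) ltac:(rewrite /c; lra).
    have := phinorm_ge r0 Hb; rewrite -/L => cL.
    have : (c%:E <= K%:E)%E by apply: le_trans LK.
    by rewrite lee_fin /c; lra.
  have Px := Ppos x Omx.
  rewrite -ler_pdivrMr //; apply: le_trans gK; exact: ler_norm.
have LowerMP : forall tau, 0 <= tau <= T ->
    (forall x s, closure Om x -> 0 <= s <= tau -> 0 <= u s x) ->
    forall x s, closure Om x -> 0 <= s <= tau -> eps <= u s x.
  move=> tau /andP [tau0 tauT] nonneg.
  have H : forall dl, 0 < dl -> forall x s, closure Om x -> 0 <= s <= tau ->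
      (-1) * u s x - 0 * Phi x - dl * s - (- eps) <= 0.
    move=> dl dl0.
    apply: (MP oOm bOm Om0 cu cPhi dPhi du tau0).
    - move=> x s Omx /andP [s0 stau] Gpos Hlap Hdt.
      have sT : 0 <= s <= T by apply/andP; split; clear -s0 stau tauT; lra.
      have [rh0 _] := Hrho s sT.
      have us0 : 0 <= u s x.
        by apply: nonneg; [exact: inC|apply/andP; split; clear -s0 stau; lra].
      move: Hdt; rewrite pde //.
      have lap0 : 0 <= lap (u s) x by clear -Hlap; lra.
      have h1 : 0 <= u s x * lap (u s) x by apply: mulr_ge0.
      have h2 : 0 <= u s x * rh s by apply: mulr_ge0.
      rewrite -/(rh s) => Hdt.
      by clear -Hdt h1 h2 dl0; lra.
    - move=> x s Cx /andP [s0 stau] [nOm|->].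
      + have [->|spos] : s = 0 \/ 0 < s.
          by case: (ltP 0 s) => h; [right|left; clear -h s0; lra].
          rewrite uinit // mulr0; have := u0C x Cx; clear; lra.
        rewrite (ubd x s (bdC x Cx nOm) spos).
        have : 0 <= dl * s by apply: mulr_ge0; clear -dl0 spos; lra.
        rewrite -/eps; clear; lra.
      + rewrite uinit // mulr0; have := u0C x Cx; clear; lra.
  move=> x s Cx sI; rewrite leNgt; apply/negP => ue.
  have sI' := sI; move: sI' => /andP [s0 _].
  pose dl := (eps - u s x) / (2 * (s + 1)).
  have dl0 : 0 < dl by rewrite /dl divr_gt0 //; clear -ue s0; lra.
  have := H dl dl0 x s Cx sI.
  have : dl * s < eps - u s x.
    rewrite /dl mulrAC -mulrA.
    have Hs : s / (2 * (s + 1)) < 1.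
      by rewrite ltr_pdivrMr; clear -s0; lra.
    rewrite -[X in _ < X]mulr1 ltr_pM2l; last by clear -ue; lra.
    exact: Hs.
  by clear; lra.
have cC : compact (closure Om).
  by apply: bounded_closed_compact; [exact: closure_bounded|exact: closed_closure].
have Pos : forall x s, closure Om x -> 0 <= s <= T -> eps <= u s x.
  have half : forall x s, closure Om x -> 0 <= s <= T -> eps / 2 < u s x.
    move=> x s Cx sT; rewrite ltNge; apply/negP => us.
    have H0 : forall x, closure Om x -> eps / 2 < (fun p : 'rV[R]_N * R => u p.2 p.1) (x, 0).
      move=> y Cy /=; rewrite uinit //; have := u0C y Cy; clear -eps0; lra.
    have [x1 [s1 [Cx1 /andP [s1pos s1T] w1 Hall]]] :=
      @first_time R N (closure Om) (fun p => u p.2 p.1) T (eps / 2) cC (@closed_closure _ Om)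
        cu (ltW T0) H0 (ex_intro _ x (ex_intro _ s (And3 Cx sT us))).
    have s1I : 0 <= s1 <= T by rewrite (ltW s1pos) s1T.
    have nn : forall y r, closure Om y -> 0 <= r <= s1 -> 0 <= u r y.
      move=> y r Cy rI; have := Hall y r Cy rI; rewrite /=; clear -eps0; lra.
    have s1I' : 0 <= s1 <= s1 by rewrite (ltW s1pos) lexx.
    have := LowerMP s1 s1I nn x1 s1 Cx1 s1I'.
    move: w1; rewrite /=; clear -eps0; lra.
  move=> x s Cx sT; apply: (LowerMP T _ _ x s Cx sT).
    by rewrite lexx (ltW T0).
  move=> y r Cy rT; have := half y r Cy rT; clear -eps0; lra.
have Upper : forall x s, closure Om x -> 0 <= s <= T -> u s x - eps <= K * Phi x.
  have H : forall dl, 0 < dl -> forall x s, closure Om x -> 0 <= s <= T ->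
      1 * u s x - K * Phi x - dl * s - eps <= 0.
    move=> dl dl0.
    apply: (MP oOm bOm Om0 cu cPhi dPhi du (ltW T0)).
    - move=> x s Omx sI Gpos Hlap Hdt.
      have sT : 0 <= s <= T by move: sI => /andP [? ?]; apply/andP; split; [apply: ltW|].
      have [_ rhM] := Hrho s sT.
      have Px := Ppos x Omx.
      have KP : 0 <= K * Phi x by apply: mulr_ge0; [|apply: ltW].
      have spos : 0 < s by move: sI => /andP [].
      have ds : 0 <= dl * s by apply: mulr_ge0; apply: ltW.
      have upos : 0 < u s x by clear -Gpos KP ds eps0; lra.
      move: Hlap; rewrite lPhi // => Hlap.
      have lr : lap (u s) x + rh s <= 0 by clear -Hlap rhM KM; lra.
      have : u s x * (lap (u s) x + rh s) <= 0 by apply: mulr_ge0_le0 => //; apply: ltW.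
      move: Hdt; rewrite pde // -/(rh s) mulrDr; clear -dl0; lra.
    - move=> x s Cx /andP [s0 sT] Hc.
      have [Omx|nOm] := pselect (Om x).
        case: Hc => // ->; rewrite uinit // mulr0; have := StepB x Omx; clear; lra.
      have bx := bdC x Cx nOm.
      rewrite bPhi // mulr0.
      have [->|spos] : s = 0 \/ 0 < s.
        by case: (ltP 0 s) => h; [right|left; clear -h s0; lra].
        by rewrite uinit // u0bd // mulr0 -/eps; clear; lra.
      rewrite (ubd x s bx spos) -/eps.
      have : 0 <= dl * s by apply: mulr_ge0; apply: ltW.
      clear; lra.
  move=> x s Cx sI; rewrite leNgt; apply/negP => ue.
  have sI' := sI; move: sI' => /andP [s0 _].
  pose dl := (u s x - eps - K * Phi x) / (2 * (s + 1)).
  have dl0 : 0 < dl by rewrite /dl divr_gt0 //; clear -ue s0; lra.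
  have := H dl dl0 x s Cx sI.
  have : dl * s < u s x - eps - K * Phi x.
    rewrite /dl mulrAC -mulrA.
    have Hs : s / (2 * (s + 1)) < 1.
      by rewrite ltr_pdivrMr; clear -s0; lra.
    rewrite -[X in _ < X]mulr1 ltr_pM2l; last by clear -ue; lra.
    exact: Hs.
  by clear; lra.
move=> t tT.
apply: le_trans KL.
apply: phinorm_le => x Omx.
have Px := Ppos x Omx.
have h1 := Upper x t (inC x Omx) tT.
have h2 := Pos x t (inC x Omx) tT.
rewrite ger0_norm; last by apply: divr_ge0; [clear -h2; lra|apply: ltW].
by rewrite ler_pdivrMr.
Qed.
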